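(* For every $n\ge2$, $$LLT_n[X;q]\;=\;\sum_{k=1}^n(-1)^{k-1}(q;q)_{k-1}\begin{bmatrix}n-1\\k-1\end{bmatrix}_q e_k[X]\;LLT_{n-k}[X;q].$$
   Context: $(q;q)_k=(1-q)\cdots(1-q^k)$, and $\begin{bmatrix}n\\k\end{bmatrix}_q=\frac{(q;q)_n}{(q;q)_k(q;q)_{n-k}}$ is the $q$-binomial coefficient. For $m\ge1$, $LLT_m[X;q]$ is the LLT polynomial $LLT_D[X;q]$ of the zero-area Dyck path $D=(NE)^m$ in the $m\times m$ lattice square, and $LLT_0=1$. The LLT polynomial of a Dyck path $D$ in the $m\times m$ square is defined as follows. Let $a_i$ be the number of full cells in row $i$ between $D$ and the diagonal. A parking function on $D$ labels the cells right of the North steps bijectively by cars $1,\dots,m$, increasing up columns; $c_i$ is the car in row $i$. Pairs of rows $i<j$ give a dinv if either $a_i=a_j$ and $c_i<c_j$, or $a_i=a_j+1$ and $c_i>c_j$; $\mathrm{dinv}(PF)$ counts these. $\sigma(PF)$ reads the cars by diagonals from highest to lowest, each diagonal from right to left. $\mathrm{pides}(PF)$ is the composition encoding the descent set of $\sigma(PF)^{-1}$. Then $LLT_D[X;q]=\sum_{PF}q^{\mathrm{dinv}(PF)}F_{\mathrm{pides}(PF)}[X]$, with $F_\alpha$ Gessel's fundamental quasisymmetric functions. (Equivalently, $LLT_m[X;q]=(q;q)_m\,h_m[X/(1-q)]$ in plethystic notation.) *)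

(* Defs.v *)
From HB Require Import structures.
From mathcomp Require Import all_boot all_order all_algebra all_fingroup.
From mathcomp Require Import mpoly.
Set Implicit Arguments. Unset Strict Implicit. Unset Printing Implicit Defensive.
Import GRing.Theory.
Local Open Scope ring_scope.

(* Coefficient ring: Q[q] = {poly rat}, q = 'X (the polynomial variable).
   Symmetric functions are evaluated in N variables x_0..x_(N-1):
   an identity of symmetric functions holds iff it holds in N variables
   for every N. *)

Definition qpoch (k : nat) : {poly rat} := \prod_(i < k) (1 - 'X ^+ i.+1).

Definition qbinom (n k : nat) : {poly rat} :=
  qpoch n %/ (qpoch k * qpoch (n - k)).

Section LLT.
Variable N : nat.

(* Gessel's fundamental quasisymmetric function F in N variables of degree m,
   indexed by its descent set: D j (for a gap j, 0 <= j < m-1, i.e. between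
   positions j+1 and j+2 in 1-indexed terms) says the composition has a
   descent there. *)
Definition fundQ (m : nat) (D : nat -> bool) : {mpoly {poly rat}[N]} :=
  \sum_(w : {ffun 'I_m -> 'I_N} |
        let s := [seq (w j : nat) | j <- enum 'I_m] in
        all (fun j => if D j then (nth 0 s j < nth 0 s j.+1)%N
                      else (nth 0 s j <= nth 0 s j.+1)%N) (iota 0 m.-1))
    \prod_(j < m) 'X_(w j).

(* A Dyck path D in the m x m square is encoded by its area sequence
   a = [a_1; ...; a_m] (a_i = number of full cells in row i between D and the
   diagonal), m = size a.  Rows are indexed 0..m-1 and cars 0..m-1 (the shift
   by one of the car labels is order preserving). *)
Section Path.
Variable a : seq nat.
Local Notation m := (size a).
Local Notation ar i := (nth 0 a i).

Definition cars (c : {perm 'I_m}) : seq nat := [seq (c i : nat) | i <- enum 'I_m].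

(* parking function: rows i, i+1 are in the same column iff a_(i+1) = a_i + 1
   (two consecutive North steps); cars increase up columns. *)
Definition is_PF (c : {perm 'I_m}) : bool :=
  all (fun i => (ar i.+1 == (ar i).+1) ==> (nth 0 (cars c) i < nth 0 (cars c) i.+1)%N)
      (iota 0 m.-1).

Definition dinv (c : {perm 'I_m}) : nat :=
  #|[set ij : 'I_m * 'I_m | (ij.1 < ij.2)%N &&
      (((ar ij.1 == ar ij.2) && (c ij.1 < c ij.2)%N) ||
       ((ar ij.1 == (ar ij.2).+1) && (c ij.2 < c ij.1)%N))]|.

(* reading order: diagonals from highest to lowest (larger a_i first), each
   diagonal from right to left (on a fixed diagonal the column grows with the
   row, so larger row index first). *)
Definition reading_rows : seq nat :=
  sort (fun i j => (ar j < ar i)%N || ((ar i == ar j) && (j <= i)%N)) (iota 0 m).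

Definition sigmaPF (c : {perm 'I_m}) : seq nat :=
  [seq nth 0 (cars c) i | i <- reading_rows].

(* descent set of sigma^{-1}: gap j is a descent iff car j+1 occurs before
   car j in the word sigma. *)
Definition pides (c : {perm 'I_m}) (j : nat) : bool :=
  (index j.+1 (sigmaPF c) < index j (sigmaPF c))%N.

Definition LLT_D : {mpoly {poly rat}[N]} :=
  \sum_(c : {perm 'I_m} | is_PF c) ('X ^+ dinv c) *: fundQ m (pides c).

End Path.

(* LLT_m: zero-area Dyck path (NE)^m, area sequence (0,...,0); LLT_0 = 1. *)
Definition LLTm (m : nat) : {mpoly {poly rat}[N]} :=
  if m is 0 then 1 else LLT_D (nseq m 0%N).

Definition elemsym (k : nat) : {mpoly {poly rat}[N]} := mesym N {poly rat} k.

End LLT.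

Arguments LLTm N m : clear implicits.
Arguments elemsym N k : clear implicits.
Arguments LLT_D N a : clear implicits.
Arguments fundQ N m D : clear implicits.

(* Main.v *)
Require Import Defs.
From HB Require Import structures.
From mathcomp Require Import all_boot all_order all_algebra all_fingroup.
From mathcomp Require Import mpoly.
From mathcomp Require Import ring zify.
Import GRing.Theory.
Local Open Scope ring_scope.

Fixpoint qbin (n k : nat) : {poly rat} :=
  match n, k with
  | _, 0 => 1
  | 0, _.+1 => 0
  | n'.+1, k'.+1 => qbin n' k' + 'X ^+ k'.+1 * qbin n' k
  end.

Lemma qpochS k : qpoch k.+1 = qpoch k * (1 - 'X ^+ k.+1).
Proof. by rewrite /qpoch big_ord_recr. Qed.

Lemma qpoch0 : qpoch 0 = 1.
Proof. by rewrite /qpoch big_ord0. Qed.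

Lemma qbin_gt n k : (n < k)%N -> qbin n k = 0.
Proof.
elim: n k => [|n IH] [|k] //= H.
by rewrite !IH ?mulr0 ?addr0 // ltnW.
Qed.

Lemma qbinP n k : (k <= n)%N -> qbin n k * qpoch k * qpoch (n - k) = qpoch n.
Proof.
elim: n k => [|n IH] [|k] //=.
- by rewrite qpoch0 !mul1r.
- by rewrite qpoch0 subn0 !mul1r.
- rewrite ltnS => Hk; rewrite mulrDl mulrDl.
  have E1 : qbin n k * qpoch k.+1 * qpoch (n.+1 - k.+1) = qpoch n * (1 - 'X ^+ k.+1).
    rewrite subSS qpochS -(IH k Hk).
    move: (qbin n k) (qpoch k) (qpoch (n - k)) (1 - 'X^(k.+1) : {poly rat}) => a b c d; ring.
  rewrite E1; case: (ltngtP k n) Hk => // [Hlt|->] _.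
  + have E2 : 'X ^+ k.+1 * qbin n k.+1 * qpoch k.+1 * qpoch (n.+1 - k.+1)
        = qpoch n * ('X ^+ k.+1 * (1 - 'X ^+ (n - k))).
      rewrite subSS -(IH k.+1 Hlt).
      have -> : (n - k = (n - k.+1).+1)%N by rewrite subnSK.
      rewrite (qpochS (n - k.+1)) qpochS.
      move: (qbin n k.+1) (qpoch k) (qpoch (n - k.+1)) ('X^(k.+1) : {poly rat}) (1 - 'X^(k.+1) : {poly rat}) (1 - 'X^((n - k.+1).+1) : {poly rat}) => a b c d e f; ring.
    rewrite E2 qpochS -mulrDr.
    have Hn : (n.+1 = k.+1 + (n - k))%N by rewrite addSn subnKC // ltnW.
    rewrite [in RHS]Hn exprD.
    move: (qpoch n) ('X^(k.+1) : {poly rat}) ('X^(n - k) : {poly rat}) => a b c; ring.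
  + by rewrite qbin_gt // mulr0 !mul0r addr0 qpochS.
Qed.

Lemma qpoch_neq0 k : qpoch k != 0.
Proof.
rewrite /qpoch; apply/prodf_neq0 => i _.
apply/negP => /eqP /(congr1 (fun p : {poly rat} => p`_0)).
rewrite coefB coef1 coefXn /= subr0 coef0 => /eqP. by rewrite oner_eq0.
Qed.

Lemma qbinomE n k : (k <= n)%N -> qbinom n k = qbin n k.
Proof.
move=> Hk; rewrite /qbinom -(qbinP _ _ Hk) -mulrA mulpK //.
by rewrite mulf_neq0 // qpoch_neq0.
Qed.

Lemma coefk n k : (1 <= k <= n)%N ->
  (qpoch k.-1 * qbinom n.-1 k.-1) * qpoch (n - k) = qpoch n.-1.
Proof.
case: k => // k; case: n => // n; rewrite /= subSS ltnS => Hk.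
rewrite qbinomE // -(qbinP _ _ Hk); ring.
Qed.

Set Implicit Arguments. Unset Strict Implicit. Unset Printing Implicit Defensive.

Section K.
Variable N : nat.

Definition asc m (u : {ffun 'I_m -> 'I_N}) : nat :=
  (\sum_(i < m) \sum_(j < m) ((i < j) && (u i < u j)))%N.
Definition mono m (u : {ffun 'I_m -> 'I_N}) : 'X_{1..N} := (\sum_(r < m) U_(u r))%MM.
Definition Gm m : {mpoly {poly rat}[N]} :=
  \sum_(u : {ffun 'I_m -> 'I_N}) ('X ^+ asc u) *: 'X_[mono u].
Definition Mc m (al : 'X_{1..N}) : {poly rat} :=
  \sum_(u : {ffun 'I_m -> 'I_N} | mono u == al) 'X ^+ asc u.
Definition Pi (al : 'X_{1..N}) : {poly rat} := \prod_(i < N) qpoch (al i).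

Lemma Gm_coef m al : (Gm m)@_al = Mc m al.
Proof.
rewrite /Gm raddf_sum /Mc [RHS]big_mkcond /=; apply: eq_bigr => u _.
by rewrite mcoeffZ mcoeffX; case: eqP => _; rewrite ?mulr1 ?mulr0.
Qed.

Lemma mdeg_mono m (u : {ffun 'I_m -> 'I_N}) : mdeg (mono u) = m.
Proof.
rewrite /mono mdeg_sum; under eq_bigr do rewrite mdeg1.
by rewrite sum_nat_const card_ord muln1.
Qed.

Lemma Mc_deg m al : mdeg al != m -> Mc m al = 0.
Proof.
move=> H; rewrite /Mc big_pred0 // => u; apply/negP => /eqP E.
by move: H; rewrite -E mdeg_mono eqxx.
Qed.

Definition ucons m (a : 'I_N) (u : {ffun 'I_m -> 'I_N}) : {ffun 'I_m.+1 -> 'I_N} :=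
  [ffun r => if unlift ord0 r is Some r' then u r' else a].

Lemma ucons0 m a (u : {ffun 'I_m -> 'I_N}) : ucons a u ord0 = a.
Proof. by rewrite ffunE unlift_none. Qed.

Lemma uconsS m a (u : {ffun 'I_m -> 'I_N}) i : ucons a u (lift ord0 i) = u i.
Proof. by rewrite ffunE liftK. Qed.

Lemma sum_ffunS m (F : {ffun 'I_m.+1 -> 'I_N} -> {poly rat}) :
  \sum_(v : {ffun 'I_m.+1 -> 'I_N}) F v =
  \sum_(a : 'I_N) \sum_(u : {ffun 'I_m -> 'I_N}) F (ucons a u).
Proof.
rewrite pair_big /=.
rewrite (reindex (fun p : 'I_N * {ffun 'I_m -> 'I_N} => ucons p.1 p.2)) //=.
exists (fun v : {ffun 'I_m.+1 -> 'I_N} => (v ord0, [ffun i => v (lift ord0 i)])).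
  move=> [a u] _ /=; rewrite ucons0; congr (_, _).
  by apply/ffunP => i; rewrite ffunE uconsS.
move=> v _ /=; apply/ffunP => r; rewrite ffunE.
case: unliftP => [j ->|->] //; by rewrite ffunE.
Qed.

Lemma mono_ucons m a (u : {ffun 'I_m -> 'I_N}) : mono (ucons a u) = (U_(a) + mono u)%MM.
Proof.
rewrite /mono big_ord_recl ucons0; congr (_ + _)%MM.
by apply: eq_bigr => i _; rewrite uconsS.
Qed.

Lemma asc_ucons m a (u : {ffun 'I_m -> 'I_N}) :
  asc (ucons a u) = (\sum_(s < m) (a < u s) + asc u)%N.
Proof.
rewrite /asc big_ord_recl big_ord_recl /= add0n; congr (_ + _)%N.
  by apply: eq_bigr => s _; rewrite ucons0 uconsS.
apply: eq_bigr => i _; rewrite big_ord_recl /= add0n.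
by apply: eq_bigr => j _; rewrite !uconsS.
Qed.

Lemma cnt_mono m a (u : {ffun 'I_m -> 'I_N}) :
  (\sum_(s < m) (a < u s))%N = (\sum_(b < N | (a < b)%N) mono u b)%N.
Proof.
under [RHS]eq_bigr do rewrite /mono mnm_sumE.
rewrite exchange_big /=; apply: eq_bigr => s _.
under eq_bigr do rewrite mnm1E.
case: (ltnP a (u s)) => H.
  rewrite (bigD1 (u s)) //= eqxx big1 // => b /andP [_ /negbTE].
  by rewrite eq_sym => ->.
rewrite big1 // => b Hb; case: eqP => // E; move: Hb; rewrite -E.
by rewrite ltnNge H.
Qed.

Lemma Mc_rec m al :
  Mc m.+1 al = \sum_(a < N | (0 < al a)%N)
      'X ^+ (\sum_(b < N | (a < b)%N) al b)%N * Mc m (al - U_(a))%MM.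
Proof.
rewrite [RHS]big_mkcond /Mc [LHS]big_mkcond /= sum_ffunS; apply: eq_bigr => a _.
case: ifP => Ha; last first.
  rewrite big1 // => u _; rewrite mono_ucons; case: eqP => // E.
  by move: Ha; rewrite -E mnmDE mnm1E eqxx.
rewrite mulr_sumr [RHS]big_mkcond; apply: eq_bigr => u _.
rewrite mono_ucons.
have -> : ((U_(a) + mono u)%MM == al) = (mono u == (al - U_(a))%MM).
  apply/eqP/eqP => [<-|->]; first by rewrite addmC addmK.
  rewrite addmC submK //; apply/mnm_lepP => i; rewrite mnm1E.
  by case: eqP => [<-|] //.
case: eqP => // E; rewrite asc_ucons exprD cnt_mono E; congr (_ ^+ _ * _).
apply: eq_bigr => b Hb; rewrite mnmBE mnm1E.
by case: eqP => [E'|]; [move: Hb; rewrite E' ltnn | rewrite subn0].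
Qed.

Lemma Pi_sub al (h : {set 'I_N}) : (mesym1 h <= al)%MM ->
  Pi al = Pi (al - mesym1 h)%MM * \prod_(i in h) (1 - 'X ^+ al i).
Proof.
move=> /mnm_lepP Hle; rewrite /Pi [X in _ * X]big_mkcond /= -big_split /=.
apply: eq_bigr => i _; rewrite mnmBE /mesym1 mnmE.
have := Hle i; rewrite /mesym1 mnmE.
case: (i \in h) => /= H; last by rewrite subn0 mulr1.
by rewrite -{1}(prednK H) qpochS prednK // subn1.
Qed.

Lemma telesc (M : nat) (f : 'I_M -> nat) :
  \sum_(a < M) ('X ^+ (\sum_(b < M | (a < b)%N) f b)%N * (1 - 'X ^+ f a))
  = 1 - 'X ^+ (\sum_(b < M) f b)%N :> {poly rat}.
Proof.
elim: M f => [|M IH] f; first by rewrite !big_ord0 expr0 subrr.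
have E : forall a : 'I_M.+1, (\sum_(b < M.+1 | (a < b)%N) f b =
      \sum_(b < M | (a < b.+1)%N) f (lift ord0 b))%N.
  move=> a; rewrite big_mkcond big_ord_recl ltn0 [RHS]big_mkcond -[RHS]add0n.
  by congr (_ + _)%N; apply: eq_bigr => i _; rewrite lift0.
rewrite [LHS]big_ord_recl.
have -> : \sum_(i < M) 'X^(\sum_(b < M.+1 | (lift ord0 i < b)%N) f b) * (1 - 'X^(f (lift ord0 i)))
   = \sum_(i < M) 'X^(\sum_(b < M | (i < b)%N) f (lift ord0 b)) * (1 - 'X^(f (lift ord0 i))) :> {poly rat}.
  apply: eq_bigr => i _; rewrite E; congr ('X^ _ * _); apply: eq_bigl => b.
rewrite (IH (fun b => f (lift ord0 b))) [in RHS]big_ord_recl E.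
have -> : \sum_(b < M | (@nat_of_ord M.+1 ord0 < b.+1)%N) f (lift ord0 b) = \sum_(b < M) f (lift ord0 b).
  by apply: eq_bigl.
rewrite mulrBr mulr1 -exprD addnC.
by rewrite addrC addrA subrK.
Qed.

Lemma Mc_Pi m al : mdeg al = m -> Mc m al * Pi al = qpoch m.
Proof.
elim: m al => [|m IH] al.
  move=> /eqP; rewrite mdeg_eq0 => /eqP ->.
  rewrite /Mc /Pi qpoch0.
  rewrite (eq_bigl predT) => [|u]; last by rewrite /mono big_ord0 eqxx.
  under eq_bigr do rewrite /asc big_ord0 expr0.
  rewrite sumr_const card_ffun !card_ord expn0 mul1r.
  by apply: big1 => i _; rewrite mnm0E qpoch0.
move=> Hdeg.
rewrite Mc_rec mulr_suml.
have E : forall a : 'I_N, (0 < al a)%N ->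
    'X ^+ (\sum_(b < N | (a < b)%N) al b)%N * Mc m (al - U_(a))%MM * Pi al
    = qpoch m * ('X ^+ (\sum_(b < N | (a < b)%N) al b)%N * (1 - 'X ^+ al a)).
  move=> a Ha.
  have Hle : (mesym1 [set a] <= al)%MM.
    by rewrite mesym1_set1; apply/mnm_lepP => i; rewrite mnm1E; case: eqP => [<-|].
  rewrite (Pi_sub Hle) mesym1_set1 big_set1 mulrA -(mulrA _ (Mc _ _)) IH; first by ring.
  apply/eqP; rewrite -(eqn_add2r 1) -(mdeg1 a) -mdegD submK ?Hdeg ?mdeg1 ?addn1 //.
  by rewrite -mesym1_set1.
rewrite (eq_bigr _ E) -mulr_sumr.
have Hfull : \sum_(a < N | (0 < al a)%N)
      ('X ^+ (\sum_(b < N | (a < b)%N) al b)%N * (1 - 'X ^+ al a))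
    = \sum_(a < N) ('X ^+ (\sum_(b < N | (a < b)%N) al b)%N * (1 - 'X ^+ al a)).
  symmetry; rewrite (bigID (fun a : 'I_N => (0 < al a)%N)) /= [X in _ + X]big1 ?addr0 // => a.
  by rewrite -eqn0Ngt => /eqP ->; rewrite expr0 subrr mulr0.
by rewrite Hfull telesc -mdegE Hdeg qpochS.
Qed.

End K.

Definition klt (x i y j : nat) : bool := ((x < y) || ((x == y) && (j < i)))%N.

Lemma klt_trans x i y j z k : klt x i y j -> klt y j z k -> klt x i z k.
Proof.
rewrite /klt => /orP[H|/andP[/eqP H H']] /orP[H2|/andP[/eqP H2 H2']]; apply/orP.
all: try (left; lia).
right; apply/andP; split; [apply/eqP|]; lia.
Qed.

Lemma klt_irr x i : klt x i x i = false.
Proof. by rewrite /klt ltnn eqxx ltnn. Qed.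

Lemma klt_total x i y j : i != j -> klt x i y j || klt y j x i.
Proof.
rewrite /klt => ne; case: (ltngtP x y) => [H|H|H] //=.
by move: ne; case: (ltngtP i j).
Qed.

Section Std.
Variables (N m : nat).
Implicit Types (u : {ffun 'I_m -> 'I_N}).

Definition keylt u (s r : 'I_m) := klt (u s) s (u r) r.

Definition stdv u (r : 'I_m) : nat := #|[set s | keylt u s r]|.

Lemma stdv_lt u r : (stdv u r < m)%N.
Proof.
rewrite /stdv; have H : [set s | keylt u s r] \subset [set~ r].
  apply/subsetP => s; rewrite !inE; apply: contraTneq => ->.
  by rewrite /keylt klt_irr.
apply: (leq_ltn_trans (subset_leq_card H)); rewrite cardsC1 card_ord.
by rewrite ltn_predL; apply: leq_ltn_trans (leq0n _) (ltn_ord r).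
Qed.

Lemma stdv_mono u r s : keylt u r s -> (stdv u r < stdv u s)%N.
Proof.
move=> Hrs; apply: proper_card; apply/properP; split.
  apply/subsetP => t; rewrite !inE => Ht; exact: klt_trans Ht Hrs.
by exists r; rewrite !inE // /keylt klt_irr.
Qed.

Lemma stdv_ltE u r s : (stdv u r < stdv u s)%N = keylt u r s.
Proof.
apply/idP/idP; last exact: stdv_mono.
move=> H; case: (eqVneq r s) => [E|ne]; first by move: H; rewrite E ltnn.
have := klt_total (u r) (u s) ne; case/orP => // H2.
by have := stdv_mono H2; rewrite ltnNge (ltnW H).
Qed.

Lemma stdv_inj u : injective (fun r => Ordinal (stdv_lt u r)).
Proof.
move=> r s /(congr1 val) /= E; apply/eqP; apply: contraT => ne.
have := klt_total (u r) (u s) ne; case/orP => H.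
  by have := stdv_mono H; rewrite E ltnn.
by have := stdv_mono H; rewrite E ltnn.
Qed.

Definition std u : {perm 'I_m} := perm (@stdv_inj u).

Lemma stdE u r : (std u r : nat) = stdv u r.
Proof. by rewrite permE. Qed.

Lemma std_ltE u r s : (std u r < std u s)%N = keylt u r s.
Proof. by rewrite !stdE stdv_ltE. Qed.

Lemma card_lt_ord (k : nat) : (k <= m)%N -> #|[set j : 'I_m | (j < k)%N]| = k.
Proof.
move=> Hk.
have -> : [set j : 'I_m | (j < k)%N] = (widen_ord Hk) @: [set: 'I_k].
  apply/setP => j; rewrite !inE; apply/idP/imsetP => [H|[j' _ ->]]; last by case: j'.
  by exists (Ordinal H) => //; apply: val_inj.
rewrite card_imset ?cardsT ?card_ord // => x y /(congr1 val) /= E; exact: val_inj.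
Qed.

Lemma card_perm_lt (c : {perm 'I_m}) r : #|[set s | (c s < c r)%N]| = c r.
Proof.
have -> : [set s | (c s < c r)%N] = c @^-1: [set j : 'I_m | (j < c r)%N].
  by apply/setP => s; rewrite !inE.
rewrite card_preimset; last exact: perm_inj.
rewrite card_lt_ord //; exact: ltnW (ltn_ord (c r)).
Qed.

Lemma std_unique u (c : {perm 'I_m}) :
  (forall r s, keylt u r s -> (c r < c s)%N) -> c = std u.
Proof.
move=> Hm; apply/permP => r; apply: val_inj => /=; rewrite stdE /stdv -card_perm_lt.
apply: eq_card => s; rewrite !inE; apply/idP/idP; last exact: Hm.
move=> H; case: (eqVneq s r) => [E|ne]; first by move: H; rewrite E ltnn.
have := klt_total (u s) (u r) ne; case/orP => // H2.
by have := Hm _ _ H2; rewrite ltnNge (ltnW H).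
Qed.

End Std.

Lemma chain (W P : nat -> nat) (m : nat) :
  (forall j, (j.+1 < m)%N -> (W j <= W j.+1)%N /\ ((P j < P j.+1)%N -> (W j < W j.+1)%N)) ->
  (forall j, (j.+1 < m)%N -> P j != P j.+1) ->
  forall j k, (j < k)%N -> (k < m)%N -> (W j <= W k)%N /\ (W j = W k -> (P k < P j)%N).
Proof.
move=> Hs Hn j k; elim: k => // k IH Hjk Hkm.
have [Hle Hlt] := Hs k Hkm; have Hne := Hn k Hkm.
have step : W k = W k.+1 -> (P k.+1 < P k)%N.
  move=> E; case: (ltngtP (P k) (P k.+1)) Hne => // H _.
  by have := Hlt H; rewrite E ltnn.
move: Hjk; rewrite ltnS leq_eqVlt => /orP [/eqP Ejk|Hjk].
  by subst; split => // E; apply: step.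
have [IH1 IH2] := IH Hjk (ltnW Hkm).
split; first exact: leq_trans IH1 Hle.
move=> E.
have E1 : W j = W k by apply/eqP; rewrite eqn_leq IH1 E Hle.
have E2 : W k = W k.+1 by rewrite -E1 E.
exact: ltn_trans (step E2) (IH2 E1).
Qed.

Lemma index_rev (T : eqType) (s : seq T) x : uniq s -> x \in s ->
  index x (rev s) = (size s - (index x s).+1)%N.
Proof.
elim: s => // y s IH /= /andP [ny us]; rewrite inE rev_cons -cats1 index_cat.
case: (eqVneq x y) => [->|ne] /=.
  by move=> _; rewrite mem_rev (negbTE ny) eqxx addn0 size_rev subn1.
by move=> xs; rewrite mem_rev xs IH // subSS.
Qed.

Lemma index_rev_lt (T : eqType) (s : seq T) x y : uniq s -> x \in s -> y \in s ->
  (index x (rev s) < index y (rev s))%N = (index y s < index x s)%N.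
Proof.
move=> us xs ys; rewrite !index_rev //.
have := index_mem x s; have := index_mem y s; rewrite xs ys => hy hx.
apply/idP/idP => H; lia.
Qed.

Section W.
Variable N : nat.
Variable a : seq nat.
Hypothesis Ha : forall i, nth 0%N a i = 0%N.
Local Notation m := (size a).

Lemma isPF_all (c : {perm 'I_m}) : is_PF c.
Proof. by apply/allP => i _; rewrite !Ha. Qed.

Lemma reading_rowsE : reading_rows a = rev (iota 0 m).
Proof.
rewrite /reading_rows.
set R := (fun i j : nat => _).
have RE : forall i j, R i j = (j <= i)%N by move=> i j; rewrite /R !Ha ltnn eqxx.
apply: (@sorted_eq _ R).
- by move=> x y z; rewrite !RE => H1 H2; exact: leq_trans H2 H1.
- by move=> x y /andP []; rewrite !RE => H1 H2; apply/eqP; rewrite eqn_leq H1 H2.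
- by apply: sort_sorted => x y; rewrite !RE leq_total.
- rewrite rev_sorted; apply: (sub_sorted _ (iota_sorted 0 m)) => x y H.
  by rewrite RE.
- by rewrite perm_sort perm_sym perm_rev.
Qed.

Lemma size_cars (c : {perm 'I_m}) : size (cars c) = m.
Proof. by rewrite /cars size_map size_enum_ord. Qed.

Lemma sigmaE (c : {perm 'I_m}) : sigmaPF c = rev (cars c).
Proof.
rewrite /sigmaPF reading_rowsE map_rev; congr rev.
by rewrite -{2}(mkseq_nth 0%N (cars c)) size_cars.
Qed.

Lemma uniq_cars (c : {perm 'I_m}) : uniq (cars c).
Proof.
rewrite /cars (map_inj_uniq (f := fun i => nat_of_ord (c i))) ?enum_uniq //.
by move=> x y /val_inj /perm_inj.
Qed.

Lemma index_cars (c : {perm 'I_m}) (v : 'I_m) :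
  index (nat_of_ord v) (cars c) = (c^-1)%g v.
Proof.
rewrite /cars -{1}(permKV c v).
rewrite (index_map (f := fun i => nat_of_ord (c i))) ?index_enum_ord //.
by move=> x y /val_inj /perm_inj.
Qed.

Lemma mem_cars (c : {perm 'I_m}) (v : 'I_m) : (nat_of_ord v) \in cars c.
Proof.
by rewrite /cars -(permKV c v); apply: (map_f (fun i => nat_of_ord (c i))); rewrite mem_enum.
Qed.

Lemma pidesE (c : {perm 'I_m}) j (hj : (j.+1 < m)%N) :
  pides c j = (index j (cars c) < index j.+1 (cars c))%N.
Proof.
rewrite /pides sigmaE index_rev_lt ?uniq_cars //.
- exact: (mem_cars c (Ordinal hj)).
- exact: (mem_cars c (Ordinal (ltnW hj))).
Qed.

Lemma dinvE (c : {perm 'I_m}) :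
  dinv c = (\sum_(i < m) \sum_(j < m) ((i < j) && (c i < c j)))%N.
Proof.
rewrite /dinv -sum1_card big_mkcond /= pair_big /=.
apply: eq_bigr => [[i j]] _ /=; rewrite inE /= !Ha eqxx /=.
by rewrite orbF; case: (_ && _).
Qed.

Definition fcond (D : nat -> bool) (w : {ffun 'I_m -> 'I_N}) : bool :=
  let s := [seq (w j : nat) | j <- enum 'I_m] in
  all (fun j => if D j then (nth 0 s j < nth 0 s j.+1)%N
                else (nth 0 s j <= nth 0 s j.+1)%N) (iota 0 m.-1).

Lemma fundQE D : fundQ N m D = \sum_(w | fcond D w) 'X_[mono w].
Proof. by rewrite /fundQ; apply: eq_bigr => w _; rewrite mprodXE. Qed.

Definition Wn (w : {ffun 'I_m -> 'I_N}) j := nth 0%N [seq (w i : nat) | i <- enum 'I_m] j.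

Lemma WnE w j (hj : (j < m)%N) : Wn w j = w (Ordinal hj).
Proof.
rewrite /Wn (nth_map (Ordinal hj)) ?size_enum_ord //.
by congr (nat_of_ord (w _)); apply: val_inj; rewrite /= nth_enum_ord.
Qed.

Lemma fcondP D w :
  reflect (forall j, (j.+1 < m)%N -> if D j then (Wn w j < Wn w j.+1)%N else (Wn w j <= Wn w j.+1)%N)
          (fcond D w).
Proof.
apply: (iffP allP) => H j.
  by move=> hj; apply: H; rewrite mem_iota add0n; case: (size a) hj => //= k; rewrite ltnS.
rewrite mem_iota add0n => hj; apply: H; case: (size a) hj => //= k; rewrite ltnS.
Qed.

Definition phi (u : {ffun 'I_m -> 'I_N}) : {perm 'I_m} * {ffun 'I_m -> 'I_N} :=
  (std u, [ffun j => u ((std u)^-1%g j)]).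

Definition psi (p : {perm 'I_m} * {ffun 'I_m -> 'I_N}) : {ffun 'I_m -> 'I_N} :=
  [ffun r => p.2 (p.1 r)].

Lemma psi_phi u : psi (phi u) = u.
Proof. by apply/ffunP => r; rewrite !ffunE permK. Qed.

Lemma phi_cond u : fcond (pides (phi u).1) (phi u).2.
Proof.
apply/fcondP => j hj; have hj0 := ltnW hj.
rewrite pidesE // (index_cars _ (Ordinal hj0)) (index_cars _ (Ordinal hj)).
rewrite (WnE _ hj0) (WnE _ hj) /= !ffunE.
set A := ((std u)^-1)%g (Ordinal hj0); set B := ((std u)^-1)%g (Ordinal hj).
have : keylt u A B by rewrite -std_ltE /A /B !permKV.
rewrite /keylt /klt; case: ifP => H /orP [H1|/andP [/eqP E H2]] //.
- by rewrite ltnNge (ltnW H) in H2.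
- exact: ltnW.
- by rewrite E.
Qed.

Lemma phi_psi p : fcond (pides p.1) p.2 -> phi (psi p) = p.
Proof.
case: p => c w /= Hc.
have Hstd : c = std (psi (c, w)).
  apply: std_unique => r s Hrs.
  set P := fun j => index j (cars c).
  have H1 : forall j, (j.+1 < m)%N -> (Wn w j <= Wn w j.+1)%N /\ ((P j < P j.+1)%N -> (Wn w j < Wn w j.+1)%N).
    move=> j hj; have := (elimT (fcondP _ _) Hc) j hj; rewrite pidesE //.
    case: ifP => H Hw; first by split => //; exact: ltnW.
    by split => // H'; rewrite H' in H.
  have H2 : forall j, (j.+1 < m)%N -> P j != P j.+1.
    move=> j hj; rewrite /P (index_cars _ (Ordinal (ltnW hj))) (index_cars _ (Ordinal hj)).
    apply/eqP => /val_inj /perm_inj /(congr1 val) /= E.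
    by move: (n_Sn j); rewrite {1}E.
  have PE : forall x : 'I_m, P (c x) = x.
    by move=> x; rewrite /P index_cars permK.
  have WE : forall x : 'I_m, Wn w (c x) = psi (c, w) x.
    by move=> x; rewrite (WnE _ (ltn_ord (c x))) ffunE /=; congr (nat_of_ord (w _)); apply: val_inj.
  case: (ltngtP (c r) (c s)) => // H.
    have [C1 C2] := chain H1 H2 H (ltn_ord (c r)).
    rewrite !WE in C1 C2; rewrite !PE in C2.
    move: Hrs; rewrite /keylt /klt.
    case/orP => [Hlt|/andP [/eqP E Hsr]]; first by rewrite ltnNge C1 in Hlt.
    by have := C2 (esym E); rewrite ltnNge (ltnW Hsr).
  by move/val_inj/perm_inj: H => E; move: Hrs; rewrite E /keylt klt_irr.
rewrite /phi -Hstd; congr (_, _); apply/ffunP => j; rewrite !ffunE /=.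
by rewrite permKV.
Qed.

Lemma dinv_std (u : {ffun 'I_m -> 'I_N}) : dinv (a:=a) (std u) = asc u.
Proof.
rewrite dinvE /asc; apply: eq_bigr => i _; apply: eq_bigr => j _.
rewrite std_ltE /keylt /klt; case: (ltnP i j) => //= H.
by rewrite (ltnNge j i) (ltnW H) andbF orbF.
Qed.

Lemma mono_phi u : mono (phi u).2 = mono u.
Proof.
rewrite /mono /= (reindex_inj (@perm_inj _ (std u))) /=.
by apply: eq_bigr => r _; rewrite ffunE permK.
Qed.

Lemma LLT_zero : LLT_D N a = Gm N m.
Proof.
rewrite /LLT_D (eq_bigl predT) => [|c]; last exact: isPF_all.
under eq_bigr do rewrite fundQE scaler_sumr.
rewrite pair_big_dep /=.
rewrite (reindex phi) /=; last first.
  by exists psi => [u _|p Hp]; [exact: psi_phi | apply: phi_psi].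
rewrite /Gm; apply: eq_big => [u|u _]; first exact: phi_cond.
by rewrite dinv_std mono_phi.
Qed.

End W.

Lemma LLTm_eq N m : LLTm N m = Gm N m.
Proof.
case: m => [|m].
  rewrite /LLTm /Gm; under eq_bigr do rewrite /asc /mono !big_ord0 expr0 scale1r mpolyX0.
  by rewrite sumr_const card_ffun !card_ord expn0.
rewrite /LLTm -{2}(size_nseq m.+1 0%N); apply: LLT_zero => i.
by rewrite nth_nseq; case: ifP.
Qed.

Section F.
Variable N : nat.


Lemma mcoeffMX_gen (p : {mpoly {poly rat}[N]}) s al :
  (p * 'X_[s])@_al = if (s <= al)%MM then p@_(al - s)%MM else 0.
Proof.
case: ifP => H.
  by rewrite -{1}(submK H) addmC mcoeffMX.
apply/eqP; apply: contraFT H => nz.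
have : al \in msupp (p * 'X_[s]) by rewrite mcoeff_msupp.
rewrite (perm_mem (msuppMX p s)) => /mapP [m' _ ->].
exact: lem_addr.
Qed.

Lemma coef_eG k j (al : 'X_{1..N}) : (elemsym N k * Gm N j)@_al =
  \sum_(h : {set 'I_N} | #|h| == k)
     (if (mesym1 h <= al)%MM then Mc j (al - mesym1 h)%MM else 0).
Proof.
rewrite /elemsym mesymE mulr_suml raddf_sum; apply: eq_bigr => h _.
rewrite mulrC -Gm_coef; exact: mcoeffMX_gen.
Qed.

Lemma Pi_neq0 (al : 'X_{1..N}) : Pi al != 0.
Proof. by apply/prodf_neq0 => i _; apply: qpoch_neq0. Qed.

Lemma mdeg_sub1 (al : 'X_{1..N}) h : (mesym1 h <= al)%MM ->
  mdeg al = (mdeg (al - mesym1 h)%MM + #|h|)%N.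
Proof. by move=> H; rewrite -mdeg_mesym1 -mdegD submK. Qed.

Lemma sum_nat_pred1 (G : nat -> {poly rat}) c b :
  \sum_(0 <= k < b | c == k) G k = if (c < b)%N then G c else 0.
Proof.
elim: b => [|b IH]; first by rewrite big_geq.
rewrite big_mkcond big_nat_recr //= -big_mkcond IH ltnS.
by case: (ltngtP c b) => H; rewrite ?addr0 ?add0r ?H.
Qed.

Lemma alt_sum (y : 'I_N -> {poly rat}) :
  \sum_(h : {set 'I_N}) (-1) ^+ #|h| * \prod_(i in h) y i = \prod_(i < N) (1 - y i).
Proof.
rewrite (eq_bigr (fun i => - y i + 1)) => [|i _]; last by rewrite addrC.
rewrite bigA_distr; apply: eq_bigr => h _.
rewrite [RHS](bigID (fun i => i \in h)) /=.
rewrite [X in _ = _ * X]big1 ?mulr1; last by move=> i Hi; rewrite (negbTE Hi).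
rewrite [in RHS](eq_bigr (fun i => -1 * y i)); last by move=> i Hi; rewrite Hi mulN1r.
by rewrite big_split /= prodr_const.
Qed.

Lemma final_alt n (al : 'X_{1..N}) : mdeg al = n ->
  \sum_(1 <= k < n.+1) ((-1) ^+ k.-1 : {poly rat}) *
     \sum_(h : {set 'I_N} | #|h| == k) \prod_(i in h) (1 - 'X ^+ al i)
  = 1 - 'X ^+ n.
Proof.
move=> Hn.
set P := fun h : {set 'I_N} => \prod_(i in h) (1 - 'X ^+ al i) : {poly rat}.
have Pz : forall h : {set 'I_N}, (n < #|h|)%N -> P h = 0.
  move=> h Hh; have [i Hi /eqP Hz] : exists2 i, i \in h & al i == 0%N.
    apply/exists_inP; apply: contraT => /negP Hno.
    rewrite ltnNge in Hh; move/negP: Hh => Hh; exfalso; apply: Hh.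
    rewrite -Hn mdegE (bigID (fun i => i \in h)) /= -[#|h|]sum1_card.
    apply: (@leq_trans (\sum_(i < N | i \in h) al i)); last exact: leq_addr.
    apply: leq_sum => i Hi.
    by rewrite lt0n; apply/negP => Hz; apply: Hno; apply/exists_inP; exists i.
  by rewrite /P (bigD1 i) //= Hz expr0 subrr mul0r.
have Hall : \sum_(h : {set 'I_N}) (-1) ^+ #|h| * P h = 'X ^+ n.
  rewrite alt_sum -Hn mdegE.
  rewrite (eq_bigr (fun i => 'X^(al i))) => [|i _]; last by rewrite opprB addrC subrK.
  by rewrite prodrXr.
have Hall2 : \sum_(h : {set 'I_N}) (-1) ^+ #|h| * P h =
    \sum_(0 <= k < n.+1) (-1) ^+ k * \sum_(h : {set 'I_N} | #|h| == k) P h.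
  under [RHS]eq_bigr do rewrite mulr_sumr big_mkcond /=.
  rewrite exchange_big /=; apply: eq_bigr => h _.
  rewrite -big_mkcond /= sum_nat_pred1 ltnS.
  by case: leqP => // H; rewrite Pz // mulr0.
move: Hall; rewrite Hall2 big_nat_recl // expr0 mul1r.
have -> : \sum_(h : {set 'I_N} | #|h| == 0%N) P h = 1.
  rewrite (big_pred1 set0) => [|h]; first by rewrite /P big_set0.
  by rewrite cards_eq0.
rewrite big_add1 /= => E.
rewrite -[LHS]opprK -sumrN -E opprD addrA subrr add0r.
congr (- _); apply: eq_bigr => i _.
by rewrite -mulNr -mulN1r -exprS.
Qed.

Lemma main_coef n (al : 'X_{1..N}) : (1 <= n)%N ->
  Mc n al = \sum_(1 <= k < n.+1)
     ((-1) ^+ k.-1 * qpoch k.-1 * qbinom n.-1 k.-1) *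
     \sum_(h : {set 'I_N} | #|h| == k)
       (if (mesym1 h <= al)%MM then Mc (n - k) (al - mesym1 h)%MM else 0).
Proof.
move=> Hn1.
case: (eqVneq (mdeg al) n) => Hdeg; last first.
  rewrite Mc_deg // big_nat_cond big1 // => k /andP [/andP [Hk1 Hkn] _].
  rewrite big1 ?mulr0 // => h /eqP Hh; case: ifP => // Hle.
  rewrite Mc_deg //; apply: contra Hdeg => /eqP E.
  by rewrite (mdeg_sub1 Hle) E Hh subnK.
apply: (mulIf (Pi_neq0 al)); rewrite Mc_Pi // mulr_suml.
rewrite big_nat_cond (eq_bigr (fun k => (-1) ^+ k.-1 * qpoch n.-1 *
    \sum_(h : {set 'I_N} | #|h| == k) \prod_(i in h) (1 - 'X ^+ al i))); last first.
  move=> k /andP [/andP [Hk1 Hkn] _].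
  rewrite -[_ * _ * Pi al]mulrA mulr_suml.
  have -> : \sum_(h : {set 'I_N} | #|h| == k)
      (if (mesym1 h <= al)%MM then Mc (n - k) (al - mesym1 h)%MM else 0) * Pi al
      = \sum_(h : {set 'I_N} | #|h| == k) qpoch (n - k) * \prod_(i in h) (1 - 'X ^+ al i).
    apply: eq_bigr => h /eqP Hh; case: ifP => Hle.
      rewrite (Pi_sub Hle) mulrA Mc_Pi //.
      by move: (mdeg_sub1 Hle); rewrite Hdeg Hh => ->; rewrite addnK.
    have [i Hi /eqP Hz] : exists2 i, i \in h & al i == 0%N.
      apply/exists_inP; apply: contraT => /negP Hno; rewrite -Hle.
      apply/mnm_lepP => i; rewrite /mesym1 mnmE; case: (boolP (i \in h)) => //= Hi.
      by rewrite lt0n; apply/negP => Hz; apply: Hno; apply/exists_inP; exists i.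
    by rewrite (bigD1 i) //= Hz expr0 subrr !mul0r mulr0.
  rewrite -mulr_sumr -(@coefk n k); last by rewrite Hk1 -ltnS.
  by rewrite !mulrA.
rewrite -big_nat_cond.
under eq_bigr do rewrite mulrAC.
rewrite -mulr_suml final_alt //.
by case: n Hn1 {Hdeg} => // n _; rewrite /= qpochS mulrC.
Qed.

End F.

Unset Implicit Arguments.

Theorem theorem3p1 (n : nat) (hn : (2 <= n)%N) (N : nat) :
  LLTm N n =
  \sum_(1 <= k < n.+1)
     ((-1) ^+ k.-1 * qpoch k.-1 * qbinom n.-1 k.-1) *: (elemsym N k * LLTm N (n - k)).
Proof.
rewrite LLTm_eq; under eq_bigr do rewrite LLTm_eq.
apply/mpolyP => al; rewrite Gm_coef raddf_sum (main_coef al (ltnW hn)).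
by apply: eq_bigr => k _; rewrite -coef_eG; symmetry; exact: mcoeffZ.
Qed.
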